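(* Let $D=(V,A)$ be a digraph, $k\in\mathbb{N}$, and $\mathcal{B}_i=(V_i,A_i)$ $(i<k)$ pairwise edge-disjoint branchings in $D$ such that for every nonempty $X\subseteq V$, $\varrho_{D\setminus\!\setminus\mathcal{B}}(X)\geq|\{i<k:V_i\cap X=\varnothing\}|$. Let $B_1\subseteq B_0$ be dangerous sets with $\varrho_{D\setminus\!\setminus\mathcal{B}}(B_0)=\varrho_{D\setminus\!\setminus\mathcal{B}}(B_1)=l\geq1$. Let $\{e_1,\dots,e_l\}$ be the set of edges of $D\setminus\!\setminus\mathcal{B}$ entering $B_0$ and let $s_j$ be the head of $e_j$. Then there is a system of pairwise edge-disjoint paths $\{P_j\}_{j=1}^{l}$ in $(D\setminus\!\setminus\mathcal{B})[B_0]$ such that $P_j$ goes from $s_j$ to $B_1$. Moreover, any such path system contains every edge of $D\setminus\!\setminus\mathcal{B}$ with tail in $B_0\setminus B_1$ and head in $B_1$, and the multiset of the last vertices of the paths $P_j$ equals the multiset of heads of the edges of $D\setminus\!\setminus\mathcal{B}$ entering $B_1$.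
   Context: Digraphs may be of arbitrary cardinality with multiple edges. A branching is a digraph whose weakly connected components are arborescences (directed trees in which every vertex is reachable from the root). $D\setminus\!\setminus\mathcal{B}=(V,A\setminus\bigcup_{i<k}A_i)$; $H[B]$ is the subgraph of $H$ spanned by $B$. $\varrho_H(X)$ is the cardinality of the set of edges of $H$ with tail outside $X$ and head in $X$ (these are the edges entering $X$). A nonempty set $X\subseteq V$ is tight if $\varrho_{D\setminus\!\setminus\mathcal{B}}(X)=|\{i<k:V_i\cap X=\varnothing\}|$, and dangerous if it is tight and $X\cap V_0\neq\varnothing$. Paths are directed simple paths; a path $P$ goes from $X$ to $Y$ if $V(P)\cap X=\{\mathrm{start}(P)\}$ and $V(P)\cap Y=\{\mathrm{end}(P)\}$ (start and end may coincide; for a vertex $x$, ''from $x$'' means from $\{x\}$). *)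

(* Defs.v *)
From HB Require Import structures.
From mathcomp Require Import all_boot.
From mathcomp Require Import boolp.
From Stdlib Require List.
From Stdlib Require Import Permutation.

Set Implicit Arguments.
Unset Strict Implicit.
Unset Printing Implicit Defensive.

Record digraph := Digraph {
  vert : Type;
  edge : Type;
  tl : edge -> vert;
  hd : edge -> vert }.

Section Defs.
Variable D : digraph.
Notation V := (vert D).
Notation E := (edge D).

Definition enters (X : V -> Prop) (e : E) : Prop := ~ X (tl e) /\ X (hd e).

Definition in_deg_atleast (H : E -> Prop) (X : V -> Prop) (n : nat) : Prop :=
  exists L : list E, List.NoDup L /\ List.length L = n /\
    List.Forall (fun e => H e /\ enters X e) L.

Definition in_deg_eq (H : E -> Prop) (X : V -> Prop) (n : nat) : Prop :=
  exists L : list E, List.NoDup L /\ List.length L = n /\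
    forall e, List.In e L <-> (H e /\ enters X e).

(* edge set of D \\ B, where B = (Vs i, As i)_{i<k} *)
Definition remaining (k : nat) (As : nat -> E -> Prop) : E -> Prop :=
  fun e => ~ (exists i, (i < k)%N /\ As i e).

Definition missing (k : nat) (Vs : nat -> V -> Prop) (X : V -> Prop) : nat :=
  count (fun i => `[< forall v, Vs i v -> ~ X v >]) (iota 0 k).

Definition nonempty (X : V -> Prop) : Prop := exists v, X v.

Definition tight k (Vs : nat -> V -> Prop) (As : nat -> E -> Prop)
  (X : V -> Prop) : Prop :=
  nonempty X /\ in_deg_eq (remaining k As) X (missing k Vs X).

Definition dangerous k (Vs : nat -> V -> Prop) (As : nat -> E -> Prop)
  (X : V -> Prop) : Prop :=
  tight k Vs As X /\ exists v, X v /\ Vs 0 v.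

Fixpoint dwalk (H : E -> Prop) (v : V) (es : list E) : Prop :=
  match es with
  | nil => True
  | e :: es' => H e /\ tl e = v /\ dwalk H (hd e) es'
  end.

Definition verts (v : V) (es : list E) : list V := v :: List.map (@hd D) es.
Definition endv (v : V) (es : list E) : V := List.last (verts v es) v.

Definition dpath (H : E -> Prop) (P : V * list E) : Prop :=
  dwalk H P.1 P.2 /\ List.NoDup (verts P.1 P.2).

Definition goes_from_to (X Y : V -> Prop) (P : V * list E) : Prop :=
  (forall v, (List.In v (verts P.1 P.2) /\ X v) <-> v = P.1) /\
  (forall v, (List.In v (verts P.1 P.2) /\ Y v) <-> v = endv P.1 P.2).

Definition path_in_induced (H : E -> Prop) (X : V -> Prop) (P : V * list E) :=
  dpath H P /\ List.Forall X (verts P.1 P.2).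

Definition joins (e : E) (a b : V) : Prop :=
  (tl e = a /\ hd e = b) \/ (tl e = b /\ hd e = a).

Fixpoint uwalkv (F : E -> Prop) (v : V) (es : list E) (vs : list V) : Prop :=
  match es, vs with
  | nil, nil => True
  | e :: es', u :: vs' => F e /\ joins e v u /\ uwalkv F u es' vs'
  | _, _ => False
  end.

(* a cycle of the underlying undirected multigraph (loops and pairs of
   parallel edges count as cycles) *)
Definition ucycle (F : E -> Prop) : Prop :=
  exists v es vs, es <> nil /\ List.NoDup es /\ uwalkv F v es vs /\
    List.last vs v = v /\ List.NoDup vs.

Definition uconn (F : E -> Prop) (v w : V) : Prop :=
  exists es vs, uwalkv F v es vs /\ List.last vs v = w.

Definition dreach (F : E -> Prop) (r w : V) : Prop :=
  exists es, dwalk F r es /\ endv r es = w.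

(* (W, F) is a branching: every weakly connected component is an
   arborescence, i.e. the underlying multigraph has no cycle (so each
   component is a tree) and each component has a root from which every
   vertex of the component is reachable by a directed path. *)
Definition branching (W : V -> Prop) (F : E -> Prop) : Prop :=
  ~ ucycle F /\
  forall v, W v -> exists r, W r /\ forall w, uconn F v w -> dreach F r w.

Definition subgraph (W : V -> Prop) (F : E -> Prop) : Prop :=
  forall e, F e -> W (tl e) /\ W (hd e).

Definition path_system (H : E -> Prop) (B0 B1 : V -> Prop) (l : nat)
  (e : 'I_l -> E) (P : 'I_l -> V * list E) : Prop :=
  (forall j, path_in_induced H B0 (P j) /\
             goes_from_to (fun v => v = hd (e j)) B1 (P j)) /\
  (forall j j', j <> j' -> forall f, List.In f (P j).2 -> List.In f (P j').2 -> False).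

End Defs.

(* Main.v *)
Require Import Defs.
From HB Require Import structures.
From mathcomp Require Import all_boot.
From mathcomp Require Import boolp.
From Stdlib Require List.
From Stdlib Require Import Permutation.
From mathcomp Require Import zify.

Set Implicit Arguments.
Unset Strict Implicit.
Unset Printing Implicit Defensive.

HB.instance Definition _ (D : digraph) := gen_eqMixin (vert D).
HB.instance Definition _ (D : digraph) := gen_eqMixin (edge D).

Lemma inP (T : eqType) (x : T) s : reflect (List.In x s) (x \in s).
Proof.
elim: s => [|y s IH] /=; first by constructor.
rewrite in_cons; apply: (iffP orP).
- by case=> [/eqP->|/IH]; [left|right].
- by case=> [->|/IH]; [left; rewrite eqxx|right].
Qed.

Lemma NoDupP (T : eqType) (s : seq T) : reflect (List.NoDup s) (uniq s).
Proof.
elim: s => [|x s IH] /=; first by constructor; constructor.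
apply: (iffP andP).
- by case=> /inP Hx /IH Hs; constructor.
- by move=> Hn; inversion Hn; subst; split; [apply/inP|apply/IH].
Qed.

Lemma last_def (T : Type) (a : T) l d d' : List.last (a :: l) d = List.last (a :: l) d'.
Proof. elim: l a => [|b l IH] a //. exact: (IH b). Qed.

Section Walks.
Variable D : digraph.
Local Notation V := (vert D).
Local Notation E := (edge D).

Lemma verts_cons (v : V) (f : E) w : verts v (f :: w) = v :: verts (hd f) w.
Proof. by []. Qed.

Lemma endv_cons (v : V) (f : E) w : endv v (f :: w) = endv (hd f) w.
Proof. rewrite /endv verts_cons /verts /=. exact: last_def. Qed.

Lemma endv_nil (v : V) : endv v [::] = v.
Proof. by []. Qed.

Lemma endv_in (v : V) (w : seq E) : List.In (endv v w) (verts v w).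
Proof.
elim: w v => [|f w IH] v; first by left.
rewrite endv_cons verts_cons; right; exact: IH.
Qed.

Lemma dwalk_rcons H (x : V) w (g : E) :
  dwalk H x (rcons w g) <-> dwalk H x w /\ H g /\ tl g = endv x w.
Proof.
elim: w x => [|f w IH] x /=.
- rewrite ?endv_nil; tauto.
- rewrite IH endv_cons; tauto.
Qed.

Lemma verts_rcons (x : V) w (g : E) : verts x (rcons w g) = verts x w ++ [:: hd g].
Proof. by elim: w x => [|f w IH] x //=; rewrite !verts_cons IH. Qed.

Lemma endv_rcons (x : V) w (g : E) : endv x (rcons w g) = hd g.
Proof. by elim: w x => [|f w IH] x //=; rewrite endv_cons. Qed.

Lemma suffix H (p : seq E) (x v : V) : dwalk H x p -> List.In v (verts x p) ->
  exists p2, dwalk H v p2 /\ endv v p2 = endv x p /\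
    List.incl (verts v p2) (verts x p) /\
    (List.NoDup (verts x p) -> List.NoDup (verts v p2)) /\ List.incl p2 p.
Proof.
elim: p x => [|f p IH] x.
- move=> _ [->|[]]; exists [::]; split=> //; split=> //.
  split; [exact: List.incl_refl | split=> //; exact: List.incl_refl].
- rewrite verts_cons => -[Hf [Ht Hw]] [Hv|Hv].
  + subst v; exists (f :: p); split; first by split.
    split=> //; split; [exact: List.incl_refl | split=> //; exact: List.incl_refl].
  + have [p2 [A [B [C [E' F]]]]] := IH _ Hw Hv.
    exists p2; split=> //; split; first by rewrite endv_cons.
    split; first by move=> a /C; right.
    split; first by move=> Hn; apply: E'; inversion Hn.
    by move=> a /F; right.
Qed.

Variable H : E -> Prop.
Variables B0 B1 : V -> Prop.

Definition good_walk (s : V) (w : seq E) :=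
  dwalk H s w /\ List.Forall B0 (verts s w) /\ B1 (endv s w).

Lemma walk_to_path s w : good_walk s w -> exists p, dwalk H s p /\
  List.NoDup (verts s p) /\ List.Forall B0 (verts s p) /\ B1 (endv s p) /\
  (forall v, List.In v (verts s p) -> B1 v -> v = endv s p) /\
  (forall f, List.In f p -> List.In f w).
Proof.
elim: w s => [|f w IH] s.
- move=> [_ [HF HB]]; exists [::]; split=> //; split; first by constructor=> //; constructor.
  split=> //; split=> //; split=> //; by move=> v [->|[]].
- move=> [[Hf [Ht Hw]] [HF HB]].
  rewrite verts_cons in HF; inversion HF as [|a b Hs HF']; subst.
  rewrite endv_cons in HB.
  have [p' [P1 [P2 [P3 [P4 [P5 P6]]]]]] := IH (hd f) (conj Hw (conj HF' HB)).
  case: (pselect (B1 (tl f))) => Hb1.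
  + exists [::]; split=> //; split; first by constructor=> //; constructor.
    split; first by constructor.
    split=> //; split=> //; by move=> v [->|[]].
  case: (pselect (List.In (tl f) (verts (hd f) p'))) => Hin.
  + have [p2 [A [B [C [E' F]]]]] := suffix P1 Hin.
    exists p2; split=> //; split; first exact: E'.
    split; first by apply/List.Forall_forall => a /C; move/List.Forall_forall: P3; apply.
    split; first by rewrite B.
    split; first by move=> v /C Hv Hb; rewrite B; apply: P5.
    by move=> a /F /P6; right.
  + exists (f :: p'); split; first by split.
    rewrite verts_cons endv_cons; split; first by constructor.
    split; first by constructor.
    split=> //; split; first by move=> v [<-|Hv] Hb //; apply: P5.
    by move=> a [->|/P6]; [left|right].
Qed.

End Walks.

Lemma count_remI (T : eqType) (a : pred T) (x : T) s : x \in s ->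
  count a s = a x + count a (rem x s).
Proof. move=> Hx; have/permP -> := perm_to_rem Hx; by []. Qed.

Lemma sum_eq_mem (T : eqType) (U : seq T) (y : T) : uniq U ->
  \sum_(v <- U) ((y == v) : nat) = (y \in U).
Proof.
elim: U => [|a U IH] /=; first by rewrite big_nil.
move=> /andP [HaU HU]; rewrite big_cons IH // in_cons.
case: eqP => [->|] /=; first by rewrite (negbTE HaU).
by [].
Qed.

Lemma sum_count (X T : eqType) (phi : X -> T) (U : seq T) (s : seq X) : uniq U ->
  \sum_(v <- U) count (fun x => phi x == v) s = count (fun x => phi x \in U) s.
Proof.
move=> HU; elim: s => [|x s IH] /=.
- by rewrite big1_seq.
- by rewrite big_split /= IH sum_eq_mem.
Qed.

Lemma count_split (T : Type) (a b : pred T) s :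
  count a s = count (fun x => a x && b x) s + count (fun x => a x && ~~ b x) s.
Proof. elim: s => [|x s IH] //=; rewrite IH; case: (a x); case: (b x) => /=; lia. Qed.

Section Flow.
Variable D : digraph.
Local Notation V := (vert D).
Local Notation E := (edge D).
Variable H : E -> Prop.
Variables B0 B1 : V -> Prop.
Hypothesis HB10 : forall v, B1 v -> B0 v.

Definition inner (f : E) := H f /\ B0 (tl f) /\ ~ B1 (tl f) /\ B0 (hd f).
Definition outd (F : seq E) v := count (fun f => tl f == v) F.
Definition ind (F : seq E) v := count (fun f => hd f == v) F.
Definition cnt (S : seq V) v := count (fun u => u == v) S.

Definition flow (F : seq E) (S : seq V) :=
  uniq F /\ (forall f, f \in F -> inner f) /\
  (forall v, B0 v -> ~ B1 v -> outd F v = ind F v + cnt S v).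

Lemma cons_sum (P : pred V) F S : (forall v, P v -> outd F v = ind F v + cnt S v) ->
  count (fun f => P (tl f)) F = count (fun f => P (hd f)) F + count P S.
Proof.
move=> Hc.
set U := undup (filter P (map (@tl D) F ++ map (@hd D) F ++ S)).
have HU : uniq U by apply: undup_uniq.
have HUP : forall v, v \in U -> P v by move=> v; rewrite mem_undup mem_filter => /andP[].
have E1 : count (fun f => P (tl f)) F = count (fun f => tl f \in U) F.
  apply: eq_in_count => f Hf; rewrite mem_undup mem_filter !mem_cat.
  by rewrite (map_f (@tl D) Hf) /= andbT.
have E2 : count (fun f => P (hd f)) F = count (fun f => hd f \in U) F.
  apply: eq_in_count => f Hf; rewrite mem_undup mem_filter !mem_cat.
  by rewrite (map_f (@hd D) Hf) orbT /= andbT.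
have E3 : count P S = count (fun u => id u \in U) S.
  apply: eq_in_count => u Hu; rewrite mem_undup mem_filter !mem_cat /=.
  by rewrite Hu !orbT andbT.
rewrite E1 E2 E3 -!sum_count //.
rewrite -big_split /=; apply: eq_big_seq => v /HUP; exact: Hc.
Qed.

Definition good_walk' := good_walk H B0 B1.

Lemma decomp (T : eqType) : forall n (F : seq E) (S : seq (T * V)),
  size F + size S <= n -> flow F (map snd S) -> uniq (map fst S) ->
  (forall p, p \in S -> B0 p.2) ->
  exists W : T -> seq E, (forall p, p \in S -> good_walk' p.2 (W p.1)) /\
    (forall p, p \in S -> forall f, f \in W p.1 -> f \in F) /\
    (forall p q, p \in S -> q \in S -> p.1 != q.1 ->
       forall f, f \in W p.1 -> f \in W q.1 -> False).
Proof.
elim=> [|n IH] F S.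
- case: F => //; case: S => // _ _ _ _; exists (fun _ => [::]); split=> //.
- case: S => [|[j v] S] Hsz Hfl Hu HB.
  + by exists (fun _ => [::]); split.
  move: Hu => /= /andP [HjS Hu].
  have HvB : B0 v by apply: (HB (j, v)); rewrite mem_head.
  have HS' : forall p, p \in S -> p.1 != j.
    by move=> p Hp; apply: contraNneq HjS => <-; apply: map_f.
  have [F1 [F2 F3]] := Hfl.
  case: (pselect (B1 v)) => Hv1.
  + have Hfl' : flow F (map snd S).
      split=> //; split=> // u Hu0 Hu1; rewrite F3 // /cnt /=.
      have -> : (v == u) = false by apply/eqP => Hvu; apply: Hu1; rewrite -Hvu.
      by [].
    have [W [W1 [W2 W3]]] := IH F S ltac:(simpl in Hsz; lia) Hfl' Hu
       (fun p Hp => HB p ltac:(by rewrite in_cons Hp orbT)).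
    exists (fun i => if i == j then [::] else W i); split; [|split].
    * move=> p; rewrite in_cons => /orP [/eqP -> | Hp] /=.
      -- rewrite eqxx; split=> //; split; [by constructor|by []].
      -- by rewrite (negbTE (HS' p Hp)); apply: W1.
    * move=> p; rewrite in_cons => /orP [/eqP -> | Hp] /=; first by rewrite eqxx.
      by rewrite (negbTE (HS' p Hp)); apply: W2.
    * move=> p q; rewrite !in_cons => /orP [/eqP -> | Hp] /orP [/eqP -> | Hq] //=;
        rewrite ?eqxx ?(negbTE (HS' p Hp)) ?(negbTE (HS' q Hq)) //.
      exact: W3.
  + have Hpos : 0 < outd F v.
      by rewrite F3 // /cnt /= eqxx; lia.
    have /hasP [f Hf /eqP Htf] : has (fun f => tl f == v) F by rewrite has_count.
    have [I1 [I2 [I3 I4]]] := F2 f Hf.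
    set F' := rem f F.
    have Hfl' : flow F' (map snd ((j, hd f) :: S)).
      split; first exact: rem_uniq.
      split; first by move=> g /mem_rem; apply: F2.
      move=> u Hu0 Hu1; have := F3 u Hu0 Hu1.
      rewrite /outd /ind /cnt /= (count_remI _ Hf) (count_remI (fun g => hd g == u) Hf) Htf.
      rewrite -/F' -/(outd F' u) -/(ind F' u). lia.
    have HszF : 0 < size F by rewrite -has_predT; apply/hasP; exists f.
    have Hsz' : size F' + size ((j, hd f) :: S) <= n.
      rewrite size_rem //; simpl in Hsz |- *; lia.
    have Hu' : uniq (map fst ((j, hd f) :: S)) by rewrite /= HjS Hu.
    have HB' : forall p, p \in (j, hd f) :: S -> B0 p.2.
      move=> p; rewrite in_cons => /orP [/eqP -> /= | Hp]; first exact: I4.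
      by apply: HB; rewrite in_cons Hp orbT.
    have [W [W1 [W2 W3]]] := IH F' ((j, hd f) :: S) Hsz' Hfl' Hu' HB'.
    have Hnf : f \notin F' by rewrite mem_rem_uniqF.
    exists (fun i => if i == j then f :: W i else W i); split; [|split].
    * move=> p; rewrite in_cons => /orP [/eqP -> | Hp] /=.
      -- rewrite eqxx.
         have [G1 [G2 G3]] := W1 (j, hd f) (mem_head _ _).
         split; first by split.
         split; first by rewrite verts_cons; constructor.
         by rewrite endv_cons.
      -- rewrite (negbTE (HS' p Hp)); apply: W1; by rewrite in_cons Hp orbT.
    * move=> p; rewrite in_cons => /orP [/eqP -> | Hp] /=.
      -- rewrite eqxx => g; rewrite in_cons => /orP [/eqP -> //| Hg].
         by apply: mem_rem (W2 (j, hd f) (mem_head _ _) g Hg).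
      -- rewrite (negbTE (HS' p Hp)) => g Hg; apply: mem_rem.
         by apply: (W2 p _ g Hg); rewrite in_cons Hp orbT.
    * have Hin : forall q, q \in S -> q \in (j, hd f) :: S by move=> q Hq; rewrite in_cons Hq orbT.
      move=> p q; rewrite !in_cons => /orP [/eqP -> | Hp] /orP [/eqP -> | Hq] //=;
        rewrite ?eqxx ?(negbTE (HS' p Hp)) ?(negbTE (HS' q Hq)) //.
      -- move=> _ g; rewrite in_cons => /orP [/eqP -> | Hg] Hg'.
         ++ by move: Hnf; rewrite (W2 q (Hin q Hq) f Hg').
         ++ exact: (W3 (j, hd f) q (mem_head _ _) (Hin q Hq) ltac:(by rewrite /= eq_sym HS') g Hg Hg').
      -- move=> _ g Hg'; rewrite in_cons => /orP [/eqP Hg | Hg].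
         ++ by move: Hnf; rewrite -Hg (W2 p (Hin p Hp) g Hg').
         ++ exact: (W3 p (j, hd f) (Hin p Hp) (mem_head _ _) (HS' p Hp) g Hg' Hg).
      -- move=> Hpq; exact: (W3 p q (Hin p Hp) (Hin q Hq) Hpq).
Qed.

End Flow.

Section Aug.
Variable D : digraph.
Local Notation V := (vert D).
Local Notation E := (edge D).
Variable H : E -> Prop.
Variables B0 B1 : V -> Prop.
Hypothesis HB10 : forall v, B1 v -> B0 v.

Local Notation inner := (inner H B0 B1).
Local Notation flow := (flow H B0 B1).

Definition asrc (a : E * bool) := if a.2 then tl a.1 else hd a.1.
Definition atgt (a : E * bool) := if a.2 then hd a.1 else tl a.1.
Definition arc_ok (F : seq E) (a : E * bool) :=
  if a.2 then inner a.1 /\ a.1 \notin F else a.1 \in F /\ ~ B1 (hd a.1).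

Fixpoint rwalk F (x : V) (w : seq (E * bool)) (y : V) : Prop :=
  match w with
  | [::] => x = y
  | a :: w' => arc_ok F a /\ asrc a = x /\ rwalk F (atgt a) w' y
  end.

Lemma rwalk_cat F x w1 w2 y :
  rwalk F x (w1 ++ w2) y <-> exists z, rwalk F x w1 z /\ rwalk F z w2 y.
Proof.
elim: w1 x => [|a w1 IH] x /=.
- by split; [move=> Hw; exists x | case=> z [-> Hw]].
- rewrite IH; split.
  + by case=> A [B [z [C E']]]; exists z.
  + by case=> z [[A [B C]] E']; split=> //; split=> //; exists z.
Qed.

Lemma rwalk_ext F F' x w y : (forall a, a \in w -> (a.1 \in F) = (a.1 \in F')) ->
  rwalk F x w y -> rwalk F' x w y.
Proof.
elim: w x => [|[f b] w IH] x //= Hm [A [B C]].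
have Hf := Hm (f, b) (mem_head _ _); simpl in Hf.
split; last split=> //; last by apply: IH => // a Ha; apply: Hm; rewrite in_cons Ha orbT.
by move: A; rewrite /arc_ok /= Hf.
Qed.

Lemma augment : forall w F S x y, rwalk F x w y -> uniq (map fst w) -> B1 y ->
  uniq F -> (forall f, f \in F -> inner f) ->
  (forall v, B0 v -> ~ B1 v -> outd F v + (x == v) = ind F v + cnt S v) ->
  exists F', flow F' S.
Proof.
elim=> [|[f b] w IH] F S x y /=.
- move=> -> _ Hy HF1 HF2 HF3; exists F; split=> //; split=> // v Hv0 Hv1.
  have := HF3 v Hv0 Hv1.
  have -> : (y == v) = false by apply/eqP => Hyv; apply: Hv1; rewrite -Hyv.
  by rewrite addn0.
- move=> [A [B C]] /andP [Hfw Huw] Hy HF1 HF2 HF3.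
  have Hext : forall F', (forall g, g != f -> (g \in F) = (g \in F')) ->
      rwalk F' (atgt (f, b)) w y.
    move=> F' HF'; apply: rwalk_ext C => a Ha; apply: HF'.
    by apply: contraNneq Hfw => <-; apply: map_f.
  case: b A B C Hext => /= A B C Hext.
  + case: A => Hi Hnf.
    apply: (IH (f :: F) S (hd f) y) => //.
    * by apply: Hext => g Hg; rewrite in_cons (negbTE Hg).
    * by rewrite /= Hnf.
    * by move=> g; rewrite in_cons => /orP [/eqP ->|]; [|apply: HF2].
    * move=> v Hv0 Hv1; have := HF3 v Hv0 Hv1.
      rewrite /outd /ind /= -/(outd F v) -/(ind F v) -B /asrc /=. lia.
  + case: A => Hf Hb1.
    apply: (IH (rem f F) S (tl f) y) => //.
    * apply: Hext => g Hg; rewrite (mem_rem_uniq _ HF1) inE Hg //.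
    * exact: rem_uniq.
    * by move=> g /mem_rem; apply: HF2.
    * move=> v Hv0 Hv1; have := HF3 v Hv0 Hv1.
      simpl in Hf; rewrite /outd /ind (count_remI _ Hf) (count_remI (fun g => hd g == v) Hf).
      rewrite -/(outd (rem f F) v) -/(ind (rem f F) v) -B /asrc /=. lia.
Qed.

Lemma rwalk_B0 F x w y : (forall f, f \in F -> inner f) -> B0 x -> rwalk F x w y -> B0 y.
Proof.
move=> HF; elim: w x => [|[f b] w IH] x /=; first by move=> ? <-.
move=> Hx [A [B C]]; apply: IH C; case: b A B => /= A B.
- by case: A => [[_ [_ [_ ?]]] _].
- by case: A => [/HF [_ [? _]] _].
Qed.

Lemma arc_same F a a' : arc_ok F a -> arc_ok F a' -> a.1 = a'.1 -> a' = a.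
Proof.
case: a => f b; case: a' => f' b' /= + + Hff; subst f'.
case: b; case: b'; rewrite /arc_ok /= => //.
- by case=> _ Hn [Hf _]; rewrite Hf in Hn.
- by case=> Hf _ [_ Hn]; rewrite Hf in Hn.
Qed.

Variable l : nat.
Variable e : 'I_l -> E.
Local Notation s := (fun j => hd (e j)).
Hypothesis Hs : forall j, B0 (hd (e j)) /\ H (e j) /\ ~ B0 (tl (e j)).
Hypothesis He : forall f, H f -> ~ B0 (tl f) -> B0 (hd f) -> exists j, e j = f.
Hypothesis Hcut : forall Z : V -> Prop, (forall v, B1 v -> Z v) -> (forall v, Z v -> B0 v) ->
  exists L : seq E, uniq L /\ l <= size L /\
    forall g, g \in L -> H g /\ ~ Z (tl g) /\ Z (hd g).

Lemma aug_step F J : flow F (map s J) -> uniq J -> size J < l ->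
  exists F' J', flow F' (map s J') /\ uniq J' /\ size J' = (size J).+1.
Proof.
move=> [F1 [F2 F3]] HJ HJl.
case: (pselect (exists j x w, j \notin J /\ rwalk F (s j) w x /\ uniq (map fst w) /\ B1 x)).
- move=> [j [x [w [HjJ [Hw [Huw Hx]]]]]].
  have [F' HF'] := augment Hw Huw Hx F1 F2 (S := map s (j :: J)) 
    ltac:(move=> v Hv0 Hv1; rewrite F3 // /cnt /=; lia).
  by exists F', (j :: J); split=> //; rewrite /= HjJ HJ.
move=> Hno; exfalso.
pose R x := exists j w, j \notin J /\ rwalk F (s j) w x /\ uniq (map fst w).
have RnB1 : forall x, R x -> ~ B1 x.
  by move=> x [j [w [A [B C]]]] Hx; apply: Hno; exists j, x, w.
have RB0 : forall x, R x -> B0 x.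
  move=> x [j [w [A [B C]]]]; apply: rwalk_B0 B => //; exact: (Hs j).1.
have Rstep : forall x a, R x -> arc_ok F a -> asrc a = x -> R (atgt a).
  move=> x a [j [w [A [B C]]]] Ha Hax.
  case: (boolP (a.1 \in map fst w)) => Haw.
    have [a' Ha' Heq] := mapP Haw.
    have Ha'ok : arc_ok F a'.
      have := B; move: Ha'; case/splitPr => w1 w2 /rwalk_cat [z [_ /= [? _]]]; done.
    have Haa : a' = a by apply: arc_same Ha Ha'ok Heq.
    subst a'.
    move: B C; case/splitPr: Ha' => w1 w2 /rwalk_cat [z [Hw1 /= [Hok [Hsz Hw2]]]] Hu.
    exists j, (w1 ++ [:: a]); split=> //; split.
    * by apply/rwalk_cat; exists z; split=> //=.
    * apply: subseq_uniq Hu; rewrite !map_cat; apply: cat_subseq; [exact: subseq_refl | by rewrite /= eqxx sub0seq].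
  + exists j, (w ++ [:: a]); split=> //; split.
    * apply/rwalk_cat; exists x; split=> //=.
    * by rewrite map_cat cats1 rcons_uniq Haw C.
pose Z v := B0 v /\ ~ R v.
have [L [HL1 [HL2 HL3]]] := Hcut (Z := Z)
  ltac:(move=> v Hv; split; [exact: HB10|by move=> /RnB1]) ltac:(by move=> v []).
pose A := [seq e j | j <- J & `[< Z (s j) >]].
pose Bf := [seq g <- F | `[< R (tl g) >] && `[< Z (hd g) >]].
have Hsub : {subset L <= A ++ Bf}.
  move=> g Hg; have [Hg1 [Hg2 [Hg3 Hg4]]] := HL3 g Hg.
  rewrite mem_cat; case: (pselect (B0 (tl g))) => Htg.
  + have Rt : R (tl g) by apply: contrapT => Hr; apply: Hg2.
    apply/orP; right; rewrite mem_filter; apply/andP; split.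
      by apply/andP; split; apply/asboolP.
    apply: contrapT => /negP Hgf; apply: Hg4.
    have := Rstep (tl g) (g, true) Rt; rewrite /arc_ok /=; apply=> //; split=> //.
    by split=> //; split=> //; split=> //; apply: RnB1.
  + have [j Hj] := He Hg1 Htg Hg3; subst g.
    apply/orP; left; apply: map_f; rewrite mem_filter; apply/andP; split; first exact/asboolP.
    apply: contrapT => /negP HjJ; apply: Hg4.
    by exists j, [::]; split.
have HszL := uniq_leq_size HL1 Hsub.
rewrite size_cat size_map !size_filter in HszL.
have Hcons := cons_sum (P := fun v => `[< R v >]) (F := F) (S := map s J)
  ltac:(move=> v /asboolP Hv; apply: F3; [exact: RB0|exact: RnB1]).
rewrite (count_split _ (fun g => `[< R (hd g) >])) in Hcons.
rewrite [count (fun f => `[< R (hd f) >]) F](count_split _ (fun g => `[< R (tl g) >])) in Hcons.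
have E0 : count (fun g => `[< R (hd g) >] && ~~ `[< R (tl g) >]) F = 0.
  apply/eqP; rewrite -leqn0 leqNgt -has_count; apply/hasP => -[g Hg /andP [/asboolP Hh /asboolP Ht]].
  apply: Ht; have := Rstep (hd g) (g, false) Hh; rewrite /arc_ok /=; apply=> //.
  by split=> //; apply: RnB1.
have E1 : count (fun g => `[< R (tl g) >] && ~~ `[< R (hd g) >]) F =
          count (fun g => `[< R (tl g) >] && `[< Z (hd g) >]) F.
  apply: eq_in_count => g Hg /=; case: (asboolP (R (tl g))) => //= _.
  have [_ [_ [_ Hh]]] := F2 g Hg.
  case: (asboolP (R (hd g))) => Hr /=; apply/esym.
  - by apply/asboolP => -[].
  - by apply/asboolP.
have E2 : count (fun g => `[< R (tl g) >] && `[< R (hd g) >]) F =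
          count (fun g => `[< R (hd g) >] && `[< R (tl g) >]) F.
  by apply: eq_count => g; rewrite andbC.
have E3 : count (fun j => `[< Z (s j) >]) J + count (fun v => `[< R v >]) (map s J) = size J.
  rewrite count_map -(count_predC (fun j => `[< Z (s j) >]) J); congr (_ + _).
  apply: eq_count => j /=; have := (Hs j).1 => H0.
  case: (asboolP (R (hd (e j)))) => Hr; apply/esym.
  - by apply/negP => /asboolP [].
  - by apply/negP => /negP /asboolP Hz; apply: Hz.
rewrite E0 E1 E2 in Hcons. move/eqP: Hcons; rewrite addn0 eqn_add2l => /eqP Hc.
rewrite Hc E3 in HszL. by have := leq_trans HL2 HszL; rewrite leqNgt HJl.
Qed.

Lemma aug_all m : m <= l -> exists F J, flow F (map s J) /\ uniq J /\ size J = m.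
Proof.
elim: m => [|m IH] Hm.
- exists [::], [::]; split=> //; split=> //; split=> //.
- have [F [J [HF [HJ HJs]]]] := IH (ltnW Hm).
  have [F' [J' [A [B C]]]] := aug_step HF HJ ltac:(by rewrite HJs).
  by exists F', J'; split=> //; split=> //; rewrite C HJs.
Qed.

End Aug.

Lemma size_length (T : Type) (s : seq T) : size s = length s.
Proof. by elim: s => //= x s ->. Qed.

Lemma map_List (T U : Type) (f : T -> U) s : List.map f s = map f s.
Proof. by elim: s => //= x s ->. Qed.

Lemma cat_app (T : Type) (s1 s2 : seq T) : cat s1 s2 = List.app s1 s2.
Proof. by elim: s1 => //= x s ->. Qed.

Lemma NoDup_same_length (T : Type) (l1 l2 : seq T) : List.NoDup l1 -> List.NoDup l2 ->
  (forall x, List.In x l1 <-> List.In x l2) -> length l1 = length l2.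
Proof.
move=> N1 N2 Heq.
have A := List.NoDup_incl_length N1 (fun x => proj1 (Heq x)).
have B := List.NoDup_incl_length N2 (fun x => proj2 (Heq x)).
lia.
Qed.

Section Part2.
Variable D : digraph.
Local Notation V := (vert D).
Local Notation E := (edge D).
Variable H : E -> Prop.
Variables B0 B1 : V -> Prop.
Hypothesis HB10 : forall v, B1 v -> B0 v.
Variable l : nat.
Variable e : 'I_l -> E.
Hypothesis He_inj : injective e.
Hypothesis Hs : forall j, H (e j) /\ ~ B0 (tl (e j)) /\ B0 (hd (e j)).
Variable P : 'I_l -> V * list E.
Hypothesis HP : path_system H B0 B1 e P.

Definition le j := last (e j) (P j).2.

Lemma le_key j : H (le j) /\ enters B1 (le j) /\ hd (le j) = endv (P j).1 (P j).2 /\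
  (((P j).2 = [::] /\ le j = e j) \/ (List.In (le j) (P j).2 /\ B0 (tl (le j)))).
Proof.
have [[[[Hw Hn] Hf] [G1 G2]] _] := (HP.1 j, HP.2).
have Hx : (P j).1 = hd (e j) by have [_ ->] := (proj2 (G1 (P j).1) erefl).
have Hend : B1 (endv (P j).1 (P j).2) by have [_ ?] := proj2 (G2 _) erefl.
rewrite /le; move: Hw Hn Hf Hend G2; case: (P j) Hx => x es /= ->.
case/lastP: es => [|es g] Hw Hn Hf Hend G2.
- have [Hh [Ht Hb]] := Hs j; rewrite endv_nil /=.
  split=> //; split; first by split=> // /HB10.
  by split=> //; left.
- rewrite last_rcons; rewrite endv_rcons in Hend G2 *.
  move/dwalk_rcons: Hw => [Hw [Hg Htg]].
  rewrite verts_rcons in Hn Hf G2.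
  have Hin : List.In (tl g) (verts (hd (e j)) es ++ [:: hd g]).
    by rewrite cat_app; apply: List.in_or_app; left; rewrite Htg; apply: endv_in.
  have Hneq : tl g <> hd g.
    move=> Heq; rewrite cat_app in Hn; have := List.NoDup_remove_2 _ _ _ Hn; rewrite List.app_nil_r.
    by apply; rewrite -Heq Htg; apply: endv_in.
  split=> //; split.
    split=> // Hb; apply: Hneq; apply: (proj1 (G2 _)); split=> //; rewrite -verts_rcons in Hin; exact: Hin.
  split=> //; right; split; last by move/List.Forall_forall: Hf; apply.
  by apply/inP; rewrite mem_rcons mem_head.
Qed.

Lemma le_inj : injective le.
Proof.
move=> j j' Heq; case: (pselect (j = j')) => // Hne; exfalso.
have [_ [_ [_ K1]]] := le_key j; have [_ [_ [_ K2]]] := le_key j'.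
case: K1 => [[_ E1]|[I1 T1]]; case: K2 => [[_ E2]|[I2 T2]].
- by apply: Hne; apply: He_inj; rewrite -E1 -E2.
- by have [_ [+ _]] := Hs j; rewrite -E1 Heq.
- by have [_ [+ _]] := Hs j'; rewrite -E2 -Heq.
- by apply: (HP.2 j j' Hne (le j)) => //; rewrite Heq.
Qed.

Definition Ml := List.map le (enum 'I_l).

Lemma Ml_NoDup : List.NoDup Ml.
Proof. by apply/NoDupP; rewrite /Ml map_List (map_inj_uniq le_inj) enum_uniq. Qed.

Lemma Ml_length : length Ml = l.
Proof. by rewrite /Ml List.length_map -size_length size_enum_ord. Qed.

Lemma Ml_in x : List.In x Ml -> exists j, x = le j.
Proof. by move/List.in_map_iff => [j [<- _]]; exists j. Qed.

Lemma Ml_le j : List.In (le j) Ml.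
Proof. apply: List.in_map; apply/inP; exact: mem_enum. Qed.

Variable L' : list E.
Hypothesis HL' : List.NoDup L' /\ length L' = l /\ forall f, List.In f L' <-> H f /\ enters B1 f.

Lemma part2 :
     (forall f, H f -> B0 (tl f) -> ~ B1 (tl f) -> B1 (hd f) ->
        exists j, List.In f (snd (P j))) /\
     (forall L1 : list E, List.NoDup L1 ->
        (forall f, List.In f L1 <-> (H f /\ enters B1 f)) ->
        Permutation (List.map (fun j => endv (fst (P j)) (snd (P j))) (enum 'I_l))
                    (List.map (@hd D) L1)).
Proof.
have [N' [Len' Mem']] := HL'.
have inclM : forall L1, (forall f, List.In f L1 <-> (H f /\ enters B1 f)) -> List.incl Ml L1.
  move=> L1 HL1 x /Ml_in [j ->]; apply/HL1; have [? [? _]] := le_key j; by split.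
split.
- move=> f Hf Ht Hnt Hh.
  have Hi : List.In f L' by apply/Mem'.
  have := List.NoDup_length_incl (l' := L') Ml_NoDup ltac:(rewrite Ml_length Len'; lia) (inclM L' Mem') f Hi.
  move=> Hfi; have [j Hj] := Ml_in Hfi; subst f.
  have [_ [_ [_ [[_ E1]|[I1 _]]]]] := le_key j; last by exists j.
  by have [_ [+ _]] := Hs j; rewrite -E1.
- move=> L1 N1 HL1.
  have Len1 : length L1 = l by rewrite -Len'; apply: NoDup_same_length => // x; rewrite HL1 Mem'.
  have Hp := NoDup_Permutation_bis (l' := L1) Ml_NoDup ltac:(rewrite Ml_length Len1; lia) (inclM L1 HL1).
  have := Permutation_map (@hd D) Hp; rewrite /Ml List.map_map.
  congr (Permutation _ _); apply: List.map_ext => j.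
  by have [_ [_ [-> _]]] := le_key j.
Qed.

End Part2.
Unset Implicit Arguments.
Set Strict Implicit.

Theorem corollary2 (D : digraph) (k : nat)
  (Vs : nat -> vert D -> Prop) (As : nat -> edge D -> Prop)
  (Hsub : forall i, (i < k)%N -> subgraph (Vs i) (As i))
  (Hbr : forall i, (i < k)%N -> branching (Vs i) (As i))
  (Hdisj : forall i j, (i < k)%N -> (j < k)%N -> i <> j ->
             forall f, As i f -> As j f -> False)
  (Hcut : forall X : vert D -> Prop, nonempty X ->
             in_deg_atleast (remaining k As) X (missing k Vs X))
  (B0 B1 : vert D -> Prop) (HB10 : forall v, B1 v -> B0 v)
  (HB0 : dangerous k Vs As B0) (HB1 : dangerous k Vs As B1)
  (l : nat) (Hl : (1 <= l)%N)
  (HlB0 : in_deg_eq (remaining k As) B0 l)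
  (HlB1 : in_deg_eq (remaining k As) B1 l)
  (e : 'I_l -> edge D) (He_inj : injective e)
  (He : forall f, (remaining k As f /\ enters B0 f) <-> exists j, e j = f) :
  (exists P, path_system (remaining k As) B0 B1 e P) /\
  (forall P, path_system (remaining k As) B0 B1 e P ->
     (forall f, remaining k As f -> B0 (tl f) -> ~ B1 (tl f) -> B1 (hd f) ->
        exists j, List.In f (snd (P j))) /\
     (forall L1 : list (edge D), List.NoDup L1 ->
        (forall f, List.In f L1 <-> (remaining k As f /\ enters B1 f)) ->
        Permutation (List.map (fun j => endv (fst (P j)) (snd (P j))) (enum 'I_l))
                    (List.map (@hd D) L1))).
Proof.
set H := remaining k As.
have Hs : forall j, H (e j) /\ ~ B0 (tl (e j)) /\ B0 (hd (e j)).
  by move=> j; have [Hh [Ht Hd]] := proj2 (He (e j)) (ex_intro _ j erefl).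
split; last first.
  move=> P HP; have [L' [N' [Len' Mem']]] := HlB1.
  exact: (part2 HB10 He_inj Hs HP (L' := L')).
have Hs' : forall j, B0 (hd (e j)) /\ H (e j) /\ ~ B0 (tl (e j)).
  by move=> j; have [? [? ?]] := Hs j.
have He' : forall f, H f -> ~ B0 (tl f) -> B0 (hd f) -> exists j, e j = f.
  by move=> f A B' C'; apply/He.
have Hlm : l = missing k Vs B0.
  have [L0 [N0 [Len0 Mem0]]] := HlB0.
  have [_ [L0' [N0' [Len0' Mem0']]]] := HB0.1.
  rewrite -Len0 -Len0'; apply: NoDup_same_length => // x; rewrite Mem0 Mem0'.
  by [].
have Hcut' : forall Z : vert D -> Prop, (forall v, B1 v -> Z v) -> (forall v, Z v -> B0 v) ->
  exists L : seq (edge D), uniq L /\ l <= size L /\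
    forall g, g \in L -> H g /\ ~ Z (tl g) /\ Z (hd g).
  move=> Z HZ1 HZ0.
  have HZn : nonempty Z by have [v [Hv _]] := HB1.2; exists v; apply: HZ1.
  have [L [NL [LenL FL]]] := Hcut Z HZn.
  exists L; split; first exact/NoDupP.
  split.
    rewrite size_length LenL Hlm; apply: sub_count => i /= /asboolP Hi.
    by apply/asboolP => v Hv HZ; apply: (Hi v Hv); apply: HZ0.
  move=> g /inP Hg; have [A [B' C']] := proj1 (List.Forall_forall _ _) FL g Hg.
  by split.
have [F [J [HF [HJ HJs]]]] := aug_all HB10 Hs' He' Hcut' (leqnn l).
have HJall : forall j, j \in J.
  move=> j; apply: contraT => HjJ.
  have := uniq_leq_size (s1 := j :: J) (s2 := enum 'I_l) ltac:(by rewrite /= HjJ HJ)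
    ltac:(by move=> x _; rewrite mem_enum).
  by rewrite /= HJs size_enum_ord ltnn.
set S := map (fun j => (j, hd (e j))) J.
have HS1 : map snd S = map (fun j => hd (e j)) J by rewrite /S -map_comp.
have HS2 : map fst S = J by rewrite /S -map_comp; elim: (J) => //= a J' ->.
have [W [W1 [W2 W3]]] := @decomp D H B0 B1 _ (size F + size S) F S (leqnn _)
  ltac:(by rewrite HS1) ltac:(by rewrite HS2)
  ltac:(by move=> p /mapP [j _ ->] /=; have [? _] := Hs' j).
have HjS : forall j, (j, hd (e j)) \in S by move=> j; apply: (map_f (fun j => (j, hd (e j)))).
have Hgw : forall j, exists p, (fun j p => dwalk H (hd (e j)) p /\
  List.NoDup (verts (hd (e j)) p) /\ List.Forall B0 (verts (hd (e j)) p) /\ B1 (endv (hd (e j)) p) /\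
  (forall v, List.In v (verts (hd (e j)) p) -> B1 v -> v = endv (hd (e j)) p) /\
  (forall f, List.In f p -> List.In f (W j))) j p.
  by move=> j; apply: walk_to_path; apply: (W1 _ (HjS j)).
have [pf Hpf] := choice Hgw.
exists (fun j => (hd (e j), pf j)); split.
- move=> j; have [P1 [P2 [P3 [P4 [P5 P6]]]]] := Hpf j; simpl.
  split; first by split.
  split.
  + by move=> v; split; [case| move=> ->; split=> //; left].
  + move=> v; split; first by case=> Hv Hb; apply: P5.
    by move=> ->; split=> //; apply: endv_in.
- move=> j j' Hne f /= Hf Hf'.
  have [_ [_ [_ [_ [_ P6]]]]] := Hpf j; have [_ [_ [_ [_ [_ P6']]]]] := Hpf j'.
  apply: (W3 _ _ (HjS j) (HjS j') ltac:(by apply/eqP) f); apply/inP.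
  + exact: P6.
  + exact: P6'.
Qed.
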